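(* Let $k\ge2$, $n>2^k$, $c=2^k-2$, and assume $d=\gcd(c,n-1)>1$; let $w=(n-1)/d$. Define $y\in\mathbb{R}^V$ by $y_v=0$ if $v=m d$ for some integer $m\ge 0$, and $y_v=\frac{1}{w(d-1)}$ otherwise. Then $y$ is a probability distribution on $V$, $\sum_{v\in C(T)}y_v\le \frac{c}{n-1}$ for every $T\in\mathcal{T}_k$, and $\max_{T\in\mathcal{T}_k}\sum_{v\in C(T)}y_v=\frac{c}{n-1}$. Hence the pair $(x,y)$ is a Nash equilibrium of the search game, where $x$ is the output of the Greedy Algorithm.
   Context: $G$ is the path graph with $V=\{0,\dots,n-1\}$ and edges $\{v,v+1\}$, $0\le v\le n-2$. A search strategy for a tree $H$ is a rooted binary tree defined recursively: a single node is a search strategy for any $H$; otherwise the root is labeled with an edge $uv$ of $H$ and its two child subtrees are search strategies for the components $H_u,H_v$ of $H-uv$ containing $u,v$. Nodes get vertex sets: root gets $V(H)$, children of a root labeled $uv$ get $V(H_u),V(H_v)$, recursively. $C(T)$ (covered set) is the set of $v$ with $V(\lambda)=\{v\}$ for a leaf $\lambda$ of $T$. $\mathcal{T}_k$ is the set of search strategies for $G$ of height (max root-to-leaf edge count) at most $k$. Intervals: $[u\oplus\ell]_r=\{w\bmod r: u\le w\le u+\ell-1\}$, subscript omitted when $r=n$. For $v\in V\setminus\{1\}$, $T_v\in\mathcal{T}_k$ denotes a strategy with $C(T_v)=[v\oplus(c+1)]$ if this interval meets $\{0,n-1\}$ and $C(T_v)=[v\oplus c]$ otherwise (such strategies exist).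 Greedy Algorithm: $v=c+1$, $\mathcal{X}=\{T_0\}$; while $v\notin\{0,1\}$: add $T_v$ to $\mathcal{X}$, set $v=(v+c)\bmod(n-1)$. Output $x$ uniform on $\mathcal{X}$. The search game: the seeker chooses $x\in\Delta_k$ (distribution on $\mathcal{T}_k$), the hider $y\in\Delta_V$ (distribution on $V$); the seeker's payoff (hider's cost) is $\sum_{T}\sum_{v} x_T y_v\,\mathbf 1[v\in C(T)]$. A Nash equilibrium is a pair $(x,y)$ where neither player can improve unilaterally. *)

(* Defs.v *)
From HB Require Import structures.
From mathcomp Require Import all_boot all_order all_algebra.
Set Implicit Arguments. Unset Strict Implicit. Unset Printing Implicit Defensive.
Import Order.TTheory GRing.Theory Num.Theory.

(* The path graph G has vertices V = {0,...,n-1} (represented by nats v < n)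
   and edges {v, v+1}, 0 <= v <= n-2.  Every subtree of a path (in particular
   every component arising by deleting edges) is a sub-path, i.e. an interval
   [a, b] of vertices.  A search strategy is a rooted binary tree whose
   internal nodes are labeled by an edge; the label e stands for edge {e,e+1}. *)
Inductive strat : Type :=
  | Leaf : strat
  | Node : nat -> strat -> strat -> strat.

Scheme Equality for strat.

Lemma strat_eqP : Equality.axiom strat_beq.
Proof.
move=> x y; apply: (iffP idP).
- exact: internal_strat_dec_bl.
- exact: internal_strat_dec_lb.
Qed.
HB.instance Definition _ := hasDecEq.Build strat strat_eqP.

(* [valid a b T] : T is a search strategy for the sub-path H with vertex set
   [a, b] = {a, ..., b}: a node labeled e must carry an edge {e, e+1} of H
   (a <= e < b), and its children are strategies for the components
   H_e = [a, e] and H_{e+1} = [e+1, b] of H - {e,e+1}. *)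
Fixpoint valid (a b : nat) (T : strat) : bool :=
  match T with
  | Leaf => true
  | Node e l r => [&& a <= e, e < b, valid a e l & valid e.+1 b r]
  end.

(* Covered set: vertices v such that some leaf has vertex set {v}. *)
Fixpoint cov (a b : nat) (T : strat) : seq nat :=
  match T with
  | Leaf => if a == b then [:: a] else [::]
  | Node e l r => cov a e l ++ cov e.+1 b r
  end.

Fixpoint height (T : strat) : nat :=
  match T with
  | Leaf => 0
  | Node _ l r => (maxn (height l) (height r)).+1
  end.

Definition strategy (n : nat) (T : strat) : bool := valid 0 n.-1 T.

Definition C (n : nat) (T : strat) : seq nat := cov 0 n.-1 T.

Definition inTk (k n : nat) (T : strat) : bool := strategy n T && (height T <= k).

Definition cint (r u l : nat) : seq nat := [seq w %% r | w <- iota u l].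

Definition Tv_spec (k n v : nat) (T : strat) : Prop :=
  let c := (2 ^ k - 2)%N in
  inTk k n T /\
  C n T =i (if has (fun x => (x == 0) || (x == n.-1)) (cint n v c.+1)
            then cint n v c.+1 else cint n v c).

(* The vertices v visited by the while loop of the Greedy Algorithm, starting
   from v = c+1 and stopping as soon as v \in {0,1}; the loop runs at most
   fuel times (fuel = n is enough: the loop stops after (n-1)/gcd(c,n-1) < n
   iterations under the hypotheses of the theorem). *)
Fixpoint greedy_vs (c n fuel v : nat) : seq nat :=
  match fuel with
  | 0 => [::]
  | fuel'.+1 => if (v == 0) || (v == 1) then [::]
                else v :: greedy_vs c n fuel' ((v + c) %% n.-1)
  end.

Definition greedy_set (k n : nat) (Tf : nat -> strat) : seq strat :=
  let c := (2 ^ k - 2)%N in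
  undup (Tf 0 :: [seq Tf v | v <- greedy_vs c n n c.+1]).

Local Open Scope ring_scope.

(* A mixed strategy of the seeker with finite support: a list of
   (probability, strategy) pairs; x \in \Delta_k. *)
Definition seeker_dist (R : realFieldType) (k n : nat) (x : seq (R * strat)) : Prop :=
  (forall p, p \in x -> 0 <= p.1 /\ inTk k n p.2) /\ \sum_(p <- x) p.1 = 1.

Definition hider_dist (R : realFieldType) (n : nat) (y : nat -> R) : Prop :=
  (forall v, (v < n)%N -> 0 <= y v) /\ \sum_(0 <= v < n) y v = 1.

Definition ysum (R : realFieldType) (n : nat) (y : nat -> R) (T : strat) : R :=
  \sum_(0 <= v < n | v \in C n T) y v.

Definition payoff (R : realFieldType) (n : nat) (x : seq (R * strat)) (y : nat -> R) : R :=
  \sum_(p <- x) p.1 * ysum n y p.2.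

Definition greedy_x (R : realFieldType) (k n : nat) (Tf : nat -> strat) : seq (R * strat) :=
  let X := greedy_set k n Tf in
  [seq ((size X)%:R^-1, T) | T <- X].

Definition nash (R : realFieldType) (k n : nat) (x : seq (R * strat)) (y : nat -> R) : Prop :=
  seeker_dist k n x /\ hider_dist n y /\
  (forall x', seeker_dist k n x' -> payoff n x' y <= payoff n x y) /\
  (forall y', hider_dist n y' -> payoff n x y <= payoff n x y').

(* Main.v *)
Require Import Defs.
From mathcomp Require Import all_boot all_order all_algebra.
From mathcomp Require Import zify ring lra.
Import Order.TTheory GRing.Theory Num.Theory.

Lemma cint_mem n v l x : v < n -> l <= n ->
  (x \in cint n v l) = ((v <= x) && (x < n) && (x < v + l)) || (x + n < v + l).
Proof.
move=> hv hl; rewrite /cint; apply/mapP/idP.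
- case=> i; rewrite mem_iota => /andP[h1 h2] ->.
  case: (ltnP i n) => hi.
    by rewrite modn_small //; lia.
  have -> : i = (i - n) + n by lia.
  rewrite modnDr modn_small; lia.
- move/orP => [/andP[/andP[h1 h2] h3]|h].
    by exists x; [rewrite mem_iota; lia | rewrite modn_small].
  exists (x + n); first by rewrite mem_iota; lia.
  by rewrite modnDr modn_small //; lia.
Qed.

Lemma has2 (a b : nat) s : has (fun x => (x == a) || (x == b)) s = (a \in s) || (b \in s).
Proof.
elim: s => //= x s ->; rewrite !inE (eq_sym a) (eq_sym b).
by case: (x == a); case: (x == b); case: (a \in s); case: (b \in s).
Qed.

Lemma memC k n v T u : let c := (2 ^ k - 2)%N in
  Tv_spec k n v T -> v < n -> c + 2 < n ->
  (u \in C n T) = if (v == 0) || (n.-1 <= v + c) then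
     ((v <= u) && (u < n) && (u < v + c.+1)) || (u + n < v + c.+1)
   else ((v <= u) && (u < n) && (u < v + c)) || (u + n < v + c).
Proof.
move=> c [_ hC] hv hn; rewrite hC -/c has2 !cint_mem //; try lia.
have -> : ((v <= 0) && (0 < n) && (0 < v + c.+1) || (0 + n < v + c.+1)
   || ((v <= n.-1) && (n.-1 < n) && (n.-1 < v + c.+1) || (n.-1 + n < v + c.+1)))
   = (v == 0) || (n.-1 <= v + c) by lia.
by case: ifP => _; rewrite cint_mem //; lia.
Qed.

Fixpoint leaves (T : strat) : nat :=
  match T with Leaf => 1 | Node _ l r => leaves l + leaves r end.

Lemma leaves_height T : leaves T <= 2 ^ height T.
Proof.
elim: T => //= e l IHl r IHr.
rewrite expnS mul2n -addnn.
apply: leq_add.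
  apply: (leq_trans IHl); apply: leq_pexp2l => //; exact: leq_maxl.
apply: (leq_trans IHr); apply: leq_pexp2l => //; exact: leq_maxr.
Qed.

Definition Qd (d x : nat) := (d - x %% d) %% d.

Lemma Qd_le d x : 0 < d -> Qd d x <= d.-1.
Proof. move=> hd; rewrite /Qd. have := ltn_pmod (d - x %% d) hd. lia. Qed.

Lemma Qd_alt d x : 0 < d -> Qd d x = if x %% d == 0 then 0 else d - x %% d.
Proof.
move=> hd; rewrite /Qd; have hr := ltn_pmod x hd.
case: eqP => h; first by rewrite h subn0 modnn.
rewrite modn_small //; lia.
Qed.

Lemma modS_alt d a : 0 < d -> a.+1 %% d = if (a %% d).+1 == d then 0 else (a %% d).+1.
Proof.
move=> hd; have hr := ltn_pmod a hd.
rewrite {1}(divn_eq a d) -addnS modnMDl.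
case: eqP => h; first by rewrite h modnn.
rewrite modn_small //; lia.
Qed.

Lemma Qd_step d a : 1 < d ->
  d * (~~ (d %| a)) + Qd d a.+1 <= d.-1 + Qd d a.
Proof.
move=> hd; have hd0 : 0 < d by lia.
rewrite !Qd_alt // modS_alt // /dvdn.
have hr := ltn_pmod a hd0.
case: eqP => h1; case: eqP => h2 /=; try lia; move: h2; case: eqP => h3 /=; lia.
Qed.

Lemma tree_inv d T : 1 < d -> forall a b,
  d * count (fun v => ~~ (d %| v)) (cov a b T) + Qd d b.+1 <= d.-1 * leaves T + Qd d a.
Proof.
move=> hd; elim: T => [|e l IHl r IHr] a b /=.
  case: eqP => [<-|_] /=.
    by rewrite addn0 muln1; apply: Qd_step.
  rewrite muln0 add0n muln1; have := @Qd_le d b.+1 (ltnW hd); lia.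
rewrite count_cat mulnDr mulnDr.
have := IHl a e; have := IHr e.+1 b; lia.
Qed.


Lemma cnt_mult d q : 0 < d -> count (fun v => d %| v) (iota 0 (q * d).+1) = q.+1.
Proof.
move=> hd; elim: q => [|q IH]; first by rewrite mul0n /= dvdn0.
have -> : (q.+1 * d).+1 = (q * d).+1 + (d.-1 + 1) by rewrite mulSn; lia.
rewrite iotaD iotaD !count_cat IH /= add0n.
have -> : count (fun v => d %| v) (iota (q * d).+1 d.-1) = 0.
  rewrite (@eq_in_count _ _ pred0) ?count_pred0 // => x; rewrite mem_iota => hx /=.
  have -> : x = q * d + (x - q * d) by lia.
  rewrite dvdn_addr ?dvdn_mull //; apply/negP => /dvdn_leq; lia.
have -> : (q * d).+1 + d.-1 = q.+1 * d by rewrite mulSn; lia.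
by rewrite dvdn_mull //; lia.
Qed.

Lemma mod_2 x M : 0 < M -> x < M + M -> x %% M = if x < M then x else x - M.
Proof.
move=> hM hx; case: ltnP => h; first by rewrite modn_small.
have -> : x = (x - M) + M by lia.
rewrite modnDr modn_small; lia.
Qed.

Section Greedy.
Variables (k n d t w : nat) (Tf : nat -> strat).
Let c := (2 ^ k - 2)%N.
Hypotheses (hd : 1 < d) (hc : c = t * d) (hM : n.-1 = w * d) (hcn : c + 2 < n)
  (hco : coprime w t) (hc0 : 0 < c) (hspec : forall v, v < n -> v != 1 -> Tv_spec k n v (Tf v)).

Definition V j := (j * c + 1) %% n.-1.
Definition aj j := if j == 0 then 0 else V j.

Lemma hM0 : 0 < n.-1. Proof. lia. Qed.
Lemma hw0 : 0 < w. Proof. have := hM0; rewrite hM; case: w => //. Qed.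
Lemma hdM : d %| n.-1. Proof. by rewrite hM dvdn_mull. Qed.
Lemma hdc : d %| c. Proof. by rewrite hc dvdn_mull. Qed.

Lemma nodvd j : 0 < j < w -> ~~ (n.-1 %| j * c).
Proof.
move=> hj; rewrite hM hc mulnA dvdn_pmul2r; last lia.
rewrite Gauss_dvdl //; apply/negP => /dvdn_leq; lia.
Qed.

Lemma V_range j : 0 < j < w -> 2 <= V j < n.-1.
Proof.
move=> hj; have hlt := ltn_pmod (j * c + 1) hM0.
rewrite /V hlt andbT.
have h0 : (j * c + 1) %% n.-1 != 0.
  apply/negP; rewrite -/(dvdn _ _) => h.
  have : d %| j * c + 1 by apply: dvdn_trans hdM h.
  rewrite dvdn_addr ?dvdn1; first lia.
  exact: dvdn_mull hdc.
have h1 : (j * c + 1) %% n.-1 != 1.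
  apply/negP => /eqP h.
  have : (j * c + 1 == 1 %[mod n.-1]) by rewrite h modn_small //; lia.
  rewrite eqn_mod_dvd; last lia.
  rewrite addnK; apply/negP; exact: nodvd.
lia.
Qed.

Lemma V_inj i j : 0 < i < w -> 0 < j < w -> V i = V j -> i = j.
Proof.
wlog: i j / i <= j => [W hi hj e|hij hi hj e].
  case: (leqP i j) => h; first exact: W.
  by symmetry; apply: W => //; lia.
case: (ltnP i j) => h; last lia.
have : (j * c + 1 == i * c + 1 %[mod n.-1]) by apply/eqP; rewrite -/(V j) -/(V i) e.
rewrite eqn_mod_dvd; last by rewrite leq_add2r leq_mul2r; lia.
rewrite subnDr -mulnBl => hd'.
have : ~~ (n.-1 %| (j - i) * c) by apply: nodvd; lia.
by rewrite hd'.
Qed.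

Lemma V_step j : (V j + c) %% n.-1 = V j.+1.
Proof. by rewrite /V modnDml mulSn; congr (_ %% _); lia. Qed.

Lemma V_w : V w = 1.
Proof.
rewrite /V hc (mulnC t) mulnA -hM mulnC modnMDl modn_small //; lia.
Qed.

Lemma greedy_eq : forall i j f, j + i = w -> i <= f -> 0 < j ->
  greedy_vs c n f (V j) = map V (iota j i).
Proof.
elim=> [|i IH] j f hji hif hj.
  rewrite addn0 in hji; rewrite hji V_w /=; by case: f hif.
case: f hif => // f hif /=.
have hr := @V_range j ltac:(lia).
have -> : (V j == 0) || (V j == 1) = false by lia.
by rewrite V_step IH //; lia.
Qed.


Lemma memT v u : v < n -> v != 1 ->
  (u \in C n (Tf v)) = if (v == 0) || (n.-1 <= v + c) then
     ((v <= u) && (u < n) && (u < v + c.+1)) || (u + n < v + c.+1)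
   else ((v <= u) && (u < n) && (u < v + c)) || (u + n < v + c).
Proof. move=> h1 h2; apply: memC => //; exact: hspec. Qed.

Lemma coverage u : u < n -> t <= count (fun j => u \in C n (Tf (aj j))) (iota 0 w).
Proof.
move=> hu.
have hM1 := hM0.
pose r := if u == 0 then n.-1 else u.
have hr : 0 < r <= n.-1 by rewrite /r; case: eqP; lia.
have hru : (u = 0 /\ r = n.-1) \/ (0 < u /\ r = u) by rewrite /r; case: eqP => h; [left|right]; lia.
have hrm : r %% n.-1 = u %% n.-1 by rewrite /r; case: eqP => [->|_]; rewrite ?modnn ?mod0n.

pose jm m := (r + m * n.-1).-1 %/ c.
have htM : t * n.-1 = w * c by rewrite hM hc mulnCA.
have Hsub : {subset map jm (iota 0 t) <= filter (fun j => u \in C n (Tf (aj j))) (iota 0 w)}.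
  move=> x /mapP [m]; rewrite mem_iota => /andP [_ hm] ->.
  rewrite mem_filter mem_iota /=.
  have hmM : m * n.-1 + n.-1 <= t * n.-1 by rewrite -mulSnr leq_mul2r; lia.
  have hmM2 : m = 0 \/ n.-1 <= m * n.-1 by case: (m) => [|m']; [left|right; rewrite mulSn; lia].
  have hs := divn_eq (r + m * n.-1).-1 c.
  have hi := ltn_pmod (r + m * n.-1).-1 hc0.
  rewrite -/(jm m) in hs.
  set i := (r + m * n.-1).-1 %% c in hs hi.
  set j := jm m in hs *.
  have hj : j < w by rewrite /j /jm ltn_divLR //; lia.
  rewrite hj /= /aj.
  case: eqP => hj0.
    rewrite hj0 mul0n add0n in hs.
    rewrite memT //=; lia.
  have hv := @V_range j ltac:(lia).
  have hmod : (V j + i) %% n.-1 = u %% n.-1.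
    rewrite /V modnDml.
    have -> : j * c + 1 + i = r + m * n.-1 by lia.
    by rewrite addnC modnMDl.
  have hu' : u %% n.-1 = if u < n.-1 then u else 0.
    case: ltnP => h; first by rewrite modn_small.
    have -> : u = n.-1 by lia.
    by rewrite modnn.
  move: hmod; rewrite mod_2 ?hu'; try lia.
  rewrite memT //; try lia.
  case: ifP; case: ifP; case: ifP; lia.
have Huniq : uniq (map jm (iota 0 t)).
  rewrite map_inj_in_uniq ?iota_uniq // => m1 m2; rewrite !mem_iota => h1 h2.
  have key : forall a b, a < b -> jm a < jm b.
    move=> a b hab; rewrite /jm.
    have hle : (r + a * n.-1).-1 + 1 * c <= (r + b * n.-1).-1.
      have : a.+1 * n.-1 <= b * n.-1 by rewrite leq_mul2r; lia.
      rewrite mulSn; lia.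
    have := leq_div2r c hle; rewrite divnDMl //; lia.
  move=> e; case: (ltngtP m1 m2) => // h; have := key _ _ h; lia.
have := uniq_leq_size Huniq Hsub.
by rewrite size_map size_iota size_filter.
Qed.

Lemma st_V j x : 0 < j < w -> x \in C n (Tf (V j)) -> 0 < x ->
  x.-1 \notin C n (Tf (V j)) -> x = V j.
Proof.
move=> hj; have hv := @V_range j hj.
rewrite !memT //; try lia.
case: ifP; lia.
Qed.

Lemma st_V_self j : 0 < j < w -> (V j \in C n (Tf (V j))) && ((V j).-1 \notin C n (Tf (V j))).
Proof.
move=> hj; have hv := @V_range j hj.
rewrite !memT //; try lia.
case: ifP; lia.
Qed.

Lemma st_0 x : x \in C n (Tf 0) -> 0 < x -> x.-1 \in C n (Tf 0).
Proof. rewrite !memT //=; lia. Qed.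

Lemma uniq_X : uniq (map (fun j => Tf (aj j)) (iota 0 w)).
Proof.
rewrite map_inj_in_uniq ?iota_uniq // => i j; rewrite !mem_iota /aj => hi hj.
case: eqP => hi0; case: eqP => hj0 e; first lia.
- have /andP[h1 h2] := @st_V_self j ltac:(lia).
  have hv := @V_range j ltac:(lia).
  rewrite -e in h1 h2; have := @st_0 _ h1 ltac:(lia); by rewrite (negbTE h2).
- have /andP[h1 h2] := @st_V_self i ltac:(lia).
  have hv := @V_range i ltac:(lia).
  rewrite e in h1 h2; have := @st_0 _ h1 ltac:(lia); by rewrite (negbTE h2).
- have /andP[h1 h2] := @st_V_self i ltac:(lia).
  rewrite e in h1 h2.
  apply: (@V_inj i j); try lia.
  apply: st_V => //; first lia.
  have := @V_range i ltac:(lia); lia.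
Qed.

Lemma greedy_set_eq : greedy_set k n Tf = map (fun j => Tf (aj j)) (iota 0 w).
Proof.
have hw := hw0.
rewrite /greedy_set -/c.
have -> : c.+1 = V 1 by rewrite /V mul1n addn1 modn_small //; lia.
rewrite (@greedy_eq (w - 1) 1 n); try lia.
have e : [seq Tf v | v <- [seq V i | i <- iota 1 (w-1)]] = [seq Tf (aj j) | j <- iota 1 (w-1)].
  by rewrite -map_comp; apply/eq_in_map => x; rewrite mem_iota /aj /=; case: eqP => //; lia.
have e0 : iota 0 w = 0 :: iota 1 (w-1) by case: (w) hw => //= w' _; rewrite subn1.
rewrite e e0 /=.
have h0 : aj 0 = 0 by [].
have hu := uniq_X; rewrite e0 /= h0 in hu; move/andP: hu => [hn hu].
by rewrite h0 (negbTE hn) undup_id.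
have : w <= n.-1 by rewrite hM leq_pmulr; lia.
lia.
Qed.

Lemma aj_ok j : j < w -> aj j < n /\ aj j != 1.
Proof.
rewrite /aj; case: eqP => h hj; first lia.
have := @V_range j ltac:(lia); lia.
Qed.

End Greedy.

Local Open Scope ring_scope.

Lemma sum_y (R : realFieldType) (d : nat) (b : R) (P : pred nat) s :
  \sum_(v <- s | P v) (if (d %| v)%N then 0 else b) = (count (fun v => P v && ~~ (d %| v)%N) s)%:R * b.
Proof.
elim: s => [|a s IH]; first by rewrite big_nil mul0r.
rewrite big_cons /= IH; case: (P a); case: (d %| a)%N => /=;
  rewrite ?add0r ?add0n // add1n -addn1 natrD mulrDl mul1r addrC //.
Qed.

Lemma sum_if (R : realFieldType) (T : eqType) (P : pred T) (b : R) s :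
  \sum_(x <- s) (if P x then b else 0) = (count P s)%:R * b.
Proof.
elim: s => [|a s IH]; first by rewrite big_nil mul0r.
rewrite big_cons /= IH; case: (P a) => /=;
  rewrite ?add0r ?add0n // add1n -addn1 natrD mulrDl mul1r addrC //.
Qed.

Lemma sum_cst (R : realFieldType) (T : eqType) (b : R) (s : seq T) :
  \sum_(x <- s) b = (size s)%:R * b.
Proof.
elim: s => [|a s IH]; first by rewrite big_nil mul0r.
by rewrite big_cons IH /= -addn1 natrD mulrDl mul1r addrC //.
Qed.

Lemma ratio1 (R : realFieldType) (a b e f : nat) : (0 < b)%N -> (0 < e)%N -> (0 < f)%N ->
  (a * e)%:R * (b%:R * e%:R)^-1 = (a * f)%:R / (b * f)%:R :> R.
Proof.
move=> hb he hf; rewrite !natrM.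
have hb' : b%:R != 0 :> R by rewrite pnatr_eq0 -lt0n.
have he' : e%:R != 0 :> R by rewrite pnatr_eq0 -lt0n.
have hf' : f%:R != 0 :> R by rewrite pnatr_eq0 -lt0n.
field; rewrite ?hb' ?he' ?hf' //.
Qed.

Theorem theorem3p1 (R : realFieldType) (k n : nat) (Tf : nat -> strat) :
  let c := (2 ^ k - 2)%N in
  let d := gcdn c (n - 1) in
  let w := ((n - 1) %/ d)%N in
  let y : nat -> R := fun v => if (d %| v)%N then 0 else (w%:R * (d - 1)%:R)^-1 in
  (2 <= k)%N -> (2 ^ k < n)%N -> (1 < d)%N ->
  (forall v, (v < n)%N -> v != 1%N -> Tv_spec k n v (Tf v)) ->
  [/\ hider_dist n y,
      (forall T, inTk k n T -> ysum n y T <= c%:R / (n - 1)%:R),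
      (exists2 T, inTk k n T & ysum n y T = c%:R / (n - 1)%:R)
    & nash k n (greedy_x R k n Tf) y].
Proof.
move=> c d w y hk hn hd hspec.
have hcdef : c = (2 ^ k - 2)%N by [].
have h4 : (2 ^ 2 <= 2 ^ k)%N by rewrite leq_pexp2l.
have hcn : (c + 2 < n)%N by lia.
have hc0 : (0 < c)%N by lia.
set t := (c %/ d)%N.
have hdc : (d %| c)%N := dvdn_gcdl _ _.
have hdM : (d %| n - 1)%N := dvdn_gcdr _ _.
have hct : c = (t * d)%N by rewrite divnK.
have hMw : (n - 1 = w * d)%N by rewrite /w divnK.
have hMn : (n.-1 = w * d)%N by rewrite -subn1.
have hco : coprime w t.
  have : (gcdn w t * d = d)%N by rewrite muln_gcdl -hMw -hct gcdnC.
  move/eqP; rewrite -{2}(mul1n d) eqn_pmul2r; last lia.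
  by move=> /eqP h; rewrite /coprime h.
have hw0 : (0 < w)%N.
  have : (0 < w * d)%N by lia.
  by rewrite muln_gt0 => /andP[].
have ht0 : (0 < t)%N by move: hc0; rewrite hct muln_gt0 => /andP[].
pose b : R := (w%:R * (d - 1)%:R)^-1.
have hb0 : 0 <= b by rewrite invr_ge0 mulr_ge0 ?ler0n.
have hB1 : (t * (d - 1))%:R * b = c%:R / (n - 1)%:R.
  by rewrite /b hct hMw; apply: ratio1; lia.
have claim2 : forall T, inTk k n T -> ysum n y T <= c%:R / (n - 1)%:R.
  move=> T /andP [hT hh]; rewrite /ysum /y sum_y -hB1 ler_wpM2r // ler_nat.
  apply: (@leq_trans (count (fun v => ~~ (d %| v)%N) (C n T))).
    rewrite -!size_filter; apply: uniq_leq_size; first by rewrite filter_uniq // iota_uniq.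
    by move=> x; rewrite !mem_filter => /andP[/andP[h1 h2] _]; rewrite h1 h2.
  have hinv := @tree_inv d T hd 0 n.-1.
  rewrite prednK in hinv; last lia.
  rewrite !Qd_alt ?mod0n ?eqxx in hinv; try lia.
  have hn1 : (n %% d = 1)%N.
    have -> : n = (w * d + 1)%N by lia.
    by rewrite modnMDl modn_small.
  rewrite hn1 /= in hinv.
  have hL := leaves_height T.
  have hL2 : (2 ^ height T <= 2 ^ k)%N by rewrite leq_pexp2l.
  rewrite /C; nia.
have hcount : count (fun v => true && ~~ (d %| v)%N) (index_iota 0 n) = (w * (d - 1))%N.
  have hm : count (fun v => d %| v)%N (iota 0 n) = w.+1.
    have -> : n = (w * d).+1 by lia.
    apply: cnt_mult; lia.
  have := count_predC (fun v => d %| v)%N (iota 0 n).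
  rewrite size_iota hm /index_iota subn0 => h.
  rewrite (@eq_count _ _ (predC (fun v => d %| v)%N)) //.
  rewrite mulnBr muln1; lia.
have hhider : hider_dist n y.
  split.
    by move=> v _; rewrite /y; case: ifP => // _; exact: hb0.
  rewrite /y sum_y hcount natrM mulfV //.
  rewrite mulf_neq0 // pnatr_eq0 -lt0n; lia.
have claim3 : exists2 T, inTk k n T & ysum n y T = c%:R / (n - 1)%:R.
  have [h0 _] := hspec 0 ltac:(lia) isT.
  exists (Tf 0) => //.
  rewrite /ysum /y sum_y -hB1; congr (_%:R * _).
  rewrite /index_iota subn0 (@eq_in_count _ _ (fun v => (v < c.+1)%N && ~~ (d %| v)%N)); last first.
    move=> v; rewrite mem_iota => /andP[_ hv] /=.
    rewrite (@memT k n Tf hcn hspec 0 v) //=; [|lia].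
    case: (d %| v)%N; rewrite ?andbF ?andbT //=; lia.
  have -> : n = (c.+1 + (n - c.+1))%N by lia.
  rewrite iotaD count_cat.
  rewrite (@eq_in_count _ _ pred0 (iota (0 + c.+1) _)); last first.
    by move=> v; rewrite mem_iota /=; lia.
  rewrite count_pred0 addn0.
  rewrite (@eq_in_count _ _ (predC (fun v => d %| v)%N)); last first.
    by move=> v; rewrite mem_iota /=; lia.
  have := count_predC (fun v => d %| v)%N (iota 0 c.+1).
  rewrite size_iota {1}hct cnt_mult; last lia.
  have htc : (t <= c)%N by rewrite hct leq_pmulr; lia.
  rewrite mulnBr muln1 -hct => h; apply/eqP; rewrite -(eqn_add2l t.+1) h; apply/eqP; lia.
have hG := @greedy_set_eq k n d t w Tf hd hct hMn hcn hco hc0 hspec.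
have hw' : w%:R != 0 :> R by rewrite pnatr_eq0 -lt0n.
have haB : (w%:R)^-1 * t%:R = c%:R / (n - 1)%:R :> R.
  have := @ratio1 R t w 1 d hw0 isT ltac:(lia).
  by rewrite !muln1 mulr1 -hct -hMw => <-; rewrite mulrC.
have upper : forall x', seeker_dist k n x' -> payoff n x' y <= c%:R / (n - 1)%:R.
  move=> x' [hx hs]; rewrite /payoff.
  apply: (@le_trans _ _ (\sum_(p <- x') p.1 * (c%:R / (n - 1)%:R))).
    rewrite big_seq [X in _ <= X]big_seq; apply: ler_sum => p hp.
    have [h1 h2] := hx p hp; apply: ler_wpM2l => //; exact: claim2.
  by rewrite -mulr_suml hs mul1r.
have lower : forall y', hider_dist n y' -> c%:R / (n - 1)%:R <= payoff n (greedy_x R k n Tf) y'.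
  move=> y' [hy0 hy1]; rewrite /payoff /greedy_x hG big_map /= -mulr_sumr size_map size_iota.
  rewrite -haB ler_wpM2l ?invr_ge0 ?ler0n //.
  under eq_bigr => T _ do rewrite /ysum big_mkcond /=.
  rewrite exchange_big /=.
  under eq_bigr => v _ do rewrite (@sum_if _ _ (fun T => v \in C n T)).
  apply: (@le_trans _ _ (\sum_(v <- index_iota 0 n) t%:R * y' v)).
    by rewrite -mulr_sumr hy1 mulr1.
  rewrite big_seq [X in _ <= X]big_seq; apply: ler_sum => v; rewrite mem_index_iota => /andP[_ hv].
  apply: ler_wpM2r; first exact: hy0.
  rewrite ler_nat count_map.
  exact: (@coverage k n d t w Tf hd hct hMn hcn hco hc0 hspec v hv).
have hseek : seeker_dist k n (greedy_x R k n Tf).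
  rewrite /greedy_x hG size_map size_iota; split.
    move=> p /mapP [T hT ->] /=; split; first by rewrite invr_ge0 ler0n.
    move: hT => /mapP [j]; rewrite mem_iota => /andP[_ hj] ->.
    have [h1 h2] := @aj_ok k n d t w hd hct hMn hcn hco hc0 j hj.
    exact: (hspec _ h1 h2).1.
  by rewrite big_map /= sum_cst size_map size_iota mulfV.
split => //; rewrite /nash.
split; first exact: hseek.
split; first exact: hhider.
split.
  move=> x' hx'; apply: le_trans (upper _ hx') (lower _ hhider).
move=> y' hy'; apply: le_trans (upper _ hseek) (lower _ hy').
Qed.
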